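(* Let $\mathbf{k}$ be a field and $\Delta$ a $(d-1)$-dimensional simplicial complex with $n$ vertices and upper skips $Q_0<\dots<Q_{d-1}$. Then $$f_{d-1}(\Delta)\le\frac{d}{Q_{d-1}(\Delta)}\binom{n}{d}.$$
   Context: A simplicial complex on $[n]$ is a family of subsets closed under subsets containing all singletons; $f_i$ counts faces of size $i+1$. With $M_i=\max\{|W|:W\subseteq[n],\ \tilde H_{|W|-i-1}(\Delta[W];\mathbf{k})\ne0\}$ (maximal shifts of the minimal free resolution of the Stanley–Reisner ring), $M_1<\dots<M_{n-d}$ lie in $\{2,\dots,n\}$ and the $d$ remaining elements of $[n]$ are the upper skips $Q_0=1<Q_1<\dots<Q_{d-1}$. *)

(* Defs.v *)
From HB Require Import structures.
From mathcomp Require Import all_boot all_order all_algebra.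
Set Implicit Arguments. Unset Strict Implicit. Unset Printing Implicit Defensive.
Import Order.TTheory GRing.Theory Num.Theory.

Definition simplicial_complex (n : nat) (Delta : {set {set 'I_n}}) : Prop :=
  (forall s t : {set 'I_n}, s \in Delta -> t \subset s -> t \in Delta) /\
  (forall v : 'I_n, [set v] \in Delta).

(* faces of Delta of cardinality p (i.e. f_{p-1} counts these) *)
Definition faces_of_size (n : nat) (Delta : {set {set 'I_n}}) (p : nat) :=
  [set s in Delta | #|s| == p].

Definition fvec (n : nat) (Delta : {set {set 'I_n}}) (i : nat) : nat :=
  #|faces_of_size Delta i.+1|.

Definition facesW (n : nat) (Delta : {set {set 'I_n}}) (W : {set 'I_n}) (p : nat) :=
  [set s in Delta | (s \subset W) && (#|s| == p)].

(* Simplicial boundary map of Delta[W], from (augmented) chains on faces of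
   size p to chains on faces of size p-1 (row-vector convention).  For
   p = 0 it is the zero map. *)
Definition bmx (F : fieldType) (n : nat) (Delta : {set {set 'I_n}})
    (W : {set 'I_n}) (p : nat) :
    'M[F]_(#|facesW Delta W p|, #|facesW Delta W p.-1|) :=
  \matrix_(a, b)
    let s : {set 'I_n} := enum_val a in let t : {set 'I_n} := enum_val b in
    if (t \subset s) && (#|s :\: t| == 1%N)
    then ((-1) ^+ #|[set x in t | [exists y in s :\: t, (x < y)%N]]|)%R
    else 0%R.

(* H~_m(Delta[W]; F) <> 0 (reduced simplicial homology, augmented chain
   complex; the degree m >= -1 corresponds to faces of size p = m+1).
   dim H~_m = #faces_{p} - rank d_p - rank d_{p+1}. *)
Definition rhom_nonzero (F : fieldType) (n : nat) (Delta : {set {set 'I_n}})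
    (W : {set 'I_n}) (m : int) : bool :=
  (0 <= m + 1)%R &&
  let p := `|(m + 1)%R|%N in
  (\rank (bmx F Delta W p.+1) + \rank (bmx F Delta W p) < #|facesW Delta W p|)%N.

(* M_i = max { |W| : H~_{|W|-i-1}(Delta[W]; F) <> 0 }  (0 if no such W) *)
Definition Mshift (F : fieldType) (n : nat) (Delta : {set {set 'I_n}}) (i : nat) : nat :=
  \max_(W : {set 'I_n} | rhom_nonzero F Delta W (#|W|%:Z - i%:Z - 1)%R) #|W|.

Definition Qtop (F : fieldType) (n : nat) (Delta : {set {set 'I_n}}) (d : nat) : nat :=
  \max_(q < n.+1 | (0 < q)%N && [forall i : 'I_(n - d), (q : nat) != Mshift F Delta i.+1])
     (q : nat).

(* Main.v *)
Require Import Defs.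
From HB Require Import structures.
From mathcomp Require Import all_boot all_order all_algebra.
From mathcomp Require Import zify.
Import Order.TTheory GRing.Theory Num.Theory.
Set Implicit Arguments. Unset Strict Implicit. Unset Printing Implicit Defensive.

Section S.
Variables (F : fieldType) (n : nat).
Local Open Scope ring_scope.

Definition ee (s t : {set 'I_n}) : F :=
  if (t \subset s) && (#|s :\: t| == 1%N)
  then (-1) ^+ #|[set x in t | [exists y in s :\: t, (x < y)%N]]| else 0.

Lemma bmxE (D : {set {set 'I_n}}) W p a b :
  bmx F D W p a b = ee (enum_val a) (enum_val b).
Proof. by rewrite mxE. Qed.

Definition cnt (t : {set 'I_n}) (x : 'I_n) := #|[set y in t | (y < x)%N]|.

Lemma ee_rem (s : {set 'I_n}) x : x \in s ->
  ee s (s :\ x) = (-1) ^+ cnt (s :\ x) x.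
Proof.
move=> xs; rewrite /ee subD1set.
have -> : s :\: (s :\ x) = [set x].
  by rewrite setDDr setDv set0U; apply/setIidPr; rewrite sub1set.
rewrite cards1 /=; congr (_ ^+ _); rewrite /cnt; apply: eq_card => y; rewrite !inE.
congr (_ && _); apply/existsP/idP => [[z]|yx]; first by rewrite !inE => /andP[/eqP->].
by exists x; rewrite !inE eqxx.
Qed.

Lemma ee_nz s t : ee s t != 0 -> exists2 x, x \in s & t = s :\ x.
Proof.
rewrite /ee; case: ifP => [/andP[ts /cards1P[x sx]] _|_]; last by rewrite eqxx.
have xst : x \in s :\: t by rewrite sx set11.
exists x; first by move: xst; rewrite inE => /andP[].
by rewrite -sx setDDr setDv set0U; apply/esym/setIidPr.
Qed.

Lemma ee_sum0 (s u : {set 'I_n}) p : #|s| = p.+2 -> #|u| = p ->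
  \sum_t ee s t * ee t u = 0.
Proof.
move=> cs cu.
have [us|nus] := boolP (u \subset s); last first.
  apply: big1 => t _; have [->|] := eqVneq (ee s t) 0; first by rewrite mul0r.
  have [->|] := eqVneq (ee t u) 0; first by rewrite mulr0.
  move=> /ee_nz[y yt eu] /ee_nz[x xs et].
  by rewrite eu et in nus; case/negP: nus; apply: subset_trans (subD1set _ _) (subD1set _ _).
have : #|s :\: u| == 2.
  by rewrite cardsD (setIidPr us) cs cu -addn2 addKn.
case/cards2P=> a [b [ab sab]].
wlog lab : a b ab sab / (a < b)%N.
  move=> IH; case: (ltngtP a b) => [|lba|/val_inj]; first exact: IH.
  - by apply: (IH b a); rewrite 1?eq_sym // sab setUC.
  - by move/eqP: ab.
have : a \in s :\: u by rewrite sab !inE eqxx.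
rewrite inE => /andP[_ as_].
have : b \in s :\: u by rewrite sab !inE eqxx orbT.
rewrite inE => /andP[_ bs].
have ua : u = s :\ a :\ b.
  by rewrite setDDl -sab setDDr setDv set0U; apply/esym/setIidPr.
have ub : u = s :\ b :\ a by rewrite ua !setDDl setUC.
have Ha : a \in s :\ b by rewrite !inE as_ andbT; apply: contraNneq ab => ->.
have Hb : b \in s :\ a by rewrite !inE bs andbT; by apply: contraNneq ab => ->.
have nab : s :\ a != s :\ b.
  by apply: contraNneq ab => e; have := Hb; rewrite e !inE eqxx.
rewrite (bigD1 (s :\ a)) // (bigD1 (s :\ b)) //=; last by rewrite eq_sym.
rewrite big1 ?addr0; last first.
  move=> t /andP[ta tb]; have [->|] := eqVneq (ee s t) 0; first by rewrite mul0r.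
  have [->|] := eqVneq (ee t u) 0; first by rewrite mulr0.
  move=> /ee_nz[y yt et] /ee_nz[x xs ets]; subst t.
  have : x \in s :\: u by rewrite inE xs andbT et !inE eqxx andbF.
  rewrite sab !inE => /orP[]/eqP ex; subst x.
  - by rewrite eqxx in ta.
  - by rewrite eqxx in tb.
rewrite {1}ua ee_rem // ee_rem // ub ee_rem // ee_rem //.
have e1 : cnt (s :\ a) a = cnt (s :\ b :\ a) a.
  apply: eq_card=> y; rewrite !inE; case: (ltnP y a) => ya; rewrite ?andbF //.
  have -> : (y != b) by apply/eqP=> eyb; subst y; move: (ltn_trans ya lab); rewrite ltnn.
  by [].
have e2 : cnt (s :\ b) b = (cnt (s :\ a :\ b) b).+1.
  rewrite /cnt (_ : #|[set y in s :\ a :\ b | (y < b)%N]|.+1 = #|a |: [set y in s :\ a :\ b | (y < b)%N]|); last by rewrite cardsU1 !inE eqxx /= andbF.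
  apply: eq_card=> y; rewrite !inE; have [->|ya] := eqVneq y a.
    by rewrite lab as_ /=; case: eqP => // abe; move/eqP: ab; rewrite abe.
  by [].
rewrite e1 e2 exprS -ua -ub.
by rewrite mulN1r mulNr mulrC addrN.
Qed.


Definition TT : {set {set 'I_n}} := [set: {set 'I_n}].

Lemma in_fW (D : {set {set 'I_n}}) W p s :
  (s \in facesW D W p) = [&& s \in D, s \subset W & #|s| == p].
Proof. by rewrite inE. Qed.

Lemma card_fW_TT W p : #|facesW TT W p| = 'C(#|W|, p).
Proof. by rewrite -cards_draws; apply: eq_card => s; rewrite !inE. Qed.

Lemma dd0 W p : bmx F TT W p.+2 *m bmx F TT W p.+1 = 0.
Proof.
apply/matrixP => a c; rewrite !mxE.
under eq_bigr => j _ do rewrite !bmxE.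
have := enum_valP a; rewrite in_fW => /and3P[_ sW /eqP cs].
have := enum_valP c; rewrite in_fW => /and3P[_ uW /eqP cu].
set s := enum_val a; set u := enum_val c.
rewrite -(big_enum_val (A := mem (facesW TT W p.+1)) (fun t => ee s t * ee t u)).
rewrite -[RHS](ee_sum0 cs cu) [RHS](bigID (mem (facesW TT W p.+1))) /=.
rewrite [X in _ = _ + X]big1 ?addr0 // => t tX.
have [->|] := eqVneq (ee s t) 0; first by rewrite mul0r.
move=> /ee_nz[x xs et]; case/negP: tX; rewrite in_fW inE /= et.
rewrite (subset_trans (subD1set _ _) sW) /=.
by move: cs; rewrite (cardsD1 x) xs add1n => -[->].
Qed.

Lemma rank_colsub m k k' (g : 'I_k' -> 'I_k) (B : 'M[F]_(m, k)) :
  (\rank (colsub g B) <= \rank B)%N.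
Proof.
rewrite -[B in colsub _ B]mulmx1 -mulmx_colsub; exact: mxrankM_maxl.
Qed.

Lemma rank_rowsub m k m' (f : 'I_m' -> 'I_m) (B : 'M[F]_(m, k)) :
  (\rank (rowsub f B) <= \rank B)%N.
Proof. exact/mxrankS/rowsub_sub. Qed.

Lemma rank_lb (W : {set 'I_n}) p w : w \in W -> ('C(#|W|.-1, p) <= \rank (bmx F TT W p.+1))%N.
Proof.
move=> wW.
set R := facesW TT (W :\ w) p.
have HR i : [/\ enum_val (A := mem R) i \subset W, w \notin enum_val (A := mem R) i &
             #|enum_val (A := mem R) i| = p].
  have := enum_valP i; rewrite in_fW => /and3P[_ sW /eqP ->]; split => //.
    exact: subset_trans sW (subD1set _ _).
  by apply/negP => /(subsetP sW); rewrite !inE eqxx.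
have Hcol i : enum_val (A := mem R) i \in facesW TT W p.
  by have [? ? ?] := HR i; rewrite in_fW inE /=; apply/andP; split => //; apply/eqP.
have Hrow i : w |: enum_val (A := mem R) i \in facesW TT W p.+1.
  have [h1 h2 c] := HR i; rewrite in_fW inE /= subUset sub1set wW /= cardsU1.
  by rewrite h1 h2 c add1n eqxx.
pose g i := enum_rank_in (Hcol i) (enum_val (A := mem R) i).
pose f i := enum_rank_in (Hrow i) (w |: enum_val (A := mem R) i).
pose S := rowsub f (colsub g (bmx F TT W p.+1)).
have SE i j : S i j = ee (w |: enum_val (A := mem R) i) (enum_val (A := mem R) j).
  rewrite /S !mxE /f /g.
  by rewrite (enum_rankK_in (Hrow i) (Hrow i)) (enum_rankK_in (Hcol j) (Hcol j)).
have S0 i j : i != j -> S i j = 0.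
  move=> ij; rewrite SE; apply/eqP; apply: contraNT ij => /ee_nz[x xi e].
  have [_ wj _] := HR j; have [_ wi _] := HR i.
  have [exw|xw] := eqVneq x w.
    by subst x; apply/eqP/enum_val_inj; rewrite e setU1K.
  by case/negP: wj; rewrite e !inE eqxx orTb andbT eq_sym.
have Sii i : S i i * S i i = 1.
  have [_ wi _] := HR i; rewrite SE.
  rewrite -{2 4}(setU1K wi) ee_rem ?setU11 // -exprMn mulrNN mulr1 expr1n //.
have SS : S *m S = 1%:M.
  apply/matrixP => i j; rewrite [LHS]mxE [RHS]mxE (bigD1 i) //= big1 ?addr0; last first.
    by move=> k ki; rewrite (S0 i k) ?mul0r // eq_sym.
  have [<-|ij] := eqVneq i j; first by rewrite Sii.
  by rewrite (S0 _ _ ij) mulr0.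
have : (\rank (1%:M : 'M[F]_#|R|) <= \rank S)%N by rewrite -SS mxrankM_maxl.
have cR : #|R| = 'C(#|W|.-1, p) by rewrite card_fW_TT (cardsD1 w W) wW.
rewrite mxrank1 -cR => h.
apply: leq_trans h _; apply: leq_trans (rank_rowsub _ _) (rank_colsub _ _).
Qed.

Lemma rank_sub (D : {set {set 'I_n}}) (W : {set 'I_n}) p :
  (\rank (bmx F D W p) <= \rank (bmx F TT W p))%N.
Proof.
have Hs P (a : 'I_#|facesW D W P|) : enum_val a \in facesW TT W P.
  by have := enum_valP a; rewrite !in_fW inE => /and3P[_ -> ->].
pose f a := enum_rank_in (Hs p a) (enum_val a).
pose g b := enum_rank_in (Hs p.-1 b) (enum_val b).
have -> : bmx F D W p = rowsub f (colsub g (bmx F TT W p)).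
  apply/matrixP => a b; rewrite !mxE /f /g.
  by rewrite (enum_rankK_in (Hs p a) (Hs p a)) (enum_rankK_in (Hs p.-1 b) (Hs p.-1 b)).
apply: leq_trans (rank_rowsub _ _) (rank_colsub _ _).
Qed.

Lemma rank_ub (D : {set {set 'I_n}}) (W : {set 'I_n}) d : (1 <= d)%N -> (1 <= #|W|)%N ->
  (\rank (bmx F D W d) <= 'C(#|W|.-1, d.-1))%N.
Proof.
move=> d1 W1; apply: leq_trans (rank_sub D W d) _.
case: d d1 => [//|[|p]] _.
  apply: leq_trans (rank_leq_col _) _; rewrite card_fW_TT.
  by case: #|W| W1 => // q _; rewrite !bin0.
have /sub_kermxP/mxrankS := dd0 W p; rewrite mxrank_ker => h.
apply: leq_trans h _.
have [w wW] := card_gt0P W1.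
have lb := rank_lb p wW; have cf := card_fW_TT W p.+1.
move: lb cf; set r := \rank _; set c := #|facesW TT W p.+1|.
case: #|W| W1 => // q _ /= lb ->; rewrite binS; lia.
Qed.

End S.

Lemma card_sum (T : finType) (S : {pred T}) (P : pred T) :
  #|[set x in S | P x]| = \sum_(x in S) (P x : nat).
Proof.
rewrite -sum1_card big_mkcond /= [RHS]big_mkcond /=; apply: eq_bigr => x _.
by rewrite !inE; case: (x \in S); case: (P x).
Qed.

Lemma count_sup n (s : {set 'I_n}) d q : #|s| = d -> (d <= q)%N ->
  \sum_(W : {set 'I_n} | #|W| == q) (s \subset W : nat) = 'C(n - d, q - d).
Proof.
move=> cs dq.
have cC : #|~: s| = n - d.
  by rewrite -cs -[X in X - _](card_ord n) -(cardsC s) addKn.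
rewrite -cC -cards_draws -[LHS](card_sum (fun W : {set 'I_n} => #|W| == q)).
rewrite -[RHS](card_in_imset (f := fun B => s :|: B)); last first.
  move=> B1 B2; rewrite !inE => /andP[h1 _] /andP[h2 _] e.
  have dj (B : {set 'I_n}) : B \subset ~: s -> (s :|: B) :\: s = B.
    move=> h; rewrite setDUl setDv set0U; apply/setDidPl.
    by rewrite disjoints_subset.
  by rewrite -(dj _ h1) e dj.
apply: eq_card => W; rewrite !inE; apply/andP/imsetP.
  move=> [/eqP cW sW]; exists (W :\: s); last by rewrite -{1}(setID W s) (setIidPr sW).
  by rewrite !inE setDE subsetIr /= -setDE cardsD (setIidPr sW) cW cs.
move=> [B]; rewrite !inE => /andP[Bs /eqP cB] ->; split; last exact: subsetUl.
rewrite unfold_in; apply/eqP.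
rewrite cardsU cB cs.
have -> : s :&: B = set0.
  by apply/setP => x; rewrite !inE; apply/negP => /andP[xs /(subsetP Bs)]; rewrite inE xs.
by rewrite cards0 subn0 subnKC.
Qed.

Lemma dcount n (S : {set {set 'I_n}}) d q : (forall s, s \in S -> #|s| = d) -> (d <= q)%N ->
  \sum_(W : {set 'I_n} | #|W| == q) #|[set s in S | s \subset W]| = #|S| * 'C(n - d, q - d).
Proof.
move=> hS dq.
under eq_bigr => W _ do rewrite card_sum.
rewrite exchange_big /= -sum_nat_const; apply: eq_bigr => s sS.
exact: count_sup (hS s sS) dq.
Qed.

Lemma bigmax_att (I : finType) (P : pred I) (G : I -> nat) :
  (0 < \max_(i | P i) G i)%N -> exists2 i, P i & \max_(i | P i) G i = G i.
Proof.
case: (pickP P) => [i Pi|none]; last by rewrite big_pred0.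
move=> _; have h : (0 < #|[pred i | P i]|)%N by apply/card_gt0P; exists i.
have [j Pj e] := eq_bigmax_cond G h.
by exists j.
Qed.

Lemma no_big_faces n (D : {set {set 'I_n}}) d W p :
  (forall s, s \in D -> #|s| <= d)%N -> (d < p)%N -> #|facesW D W p| = 0%N.
Proof.
move=> hD dp; apply: eq_card0 => s; rewrite !inE.
apply/negP => /and3P[sD _ /eqP cs]; have := hD s sD; rewrite cs leqNgt dp.
by [].
Qed.

Lemma Mshift_ne1 (F : fieldType) n (D : {set {set 'I_n}}) j : simplicial_complex D -> (1 <= j)%N ->
  Mshift F D j != 1%N.
Proof.
move=> [cl sg] j1; apply/eqP => e.
have := @bigmax_att _ (fun W : {set 'I_n} => rhom_nonzero F D W (#|W|%:Z - j%:Z - 1)%R) (fun W => #|W|).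
rewrite -/(Mshift F D j) e => /(_ isT) [W hr /esym cW].
move: hr; rewrite cW /rhom_nonzero.
case: j j1 {e} => [//|[|j]] _; last first.
  by rewrite (_ : (1%:Z - j.+2%:Z - 1 + 1 = - j.+1%:Z)%R) //; lia.
rewrite (_ : (1%:Z - 1%:Z - 1 + 1 = 0)%R) //= .
have [v ->] : exists v, W = [set v] by apply/cards1P/eqP.
set B := bmx F D [set v] 1.
have e0 : (set0 : {set 'I_n}) \in facesW D [set v] 0.
  by rewrite in_fW cards0 sub0set eqxx !andbT; apply: cl (sg v) (sub0set _).
have e1 : [set v] \in facesW D [set v] 1.
  by rewrite in_fW cards1 subxx sg.
have c0 : #|facesW D [set v] 0| = 1%N.
  apply/eqP/cards1P; exists set0; apply/setP => s; rewrite !inE.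
  apply/idP/idP; first by move=> /and3P[_ _]; rewrite cards_eq0.
  by move=> /eqP->; move: e0; rewrite in_fW.
rewrite [X in (_ < X)%N]c0 ltnS leqn0 addn_eq0 mxrank_eq0 => /andP[/eqP B0 _].
have : B (enum_rank_in e1 [set v]) (enum_rank_in e0 set0) = 0%R by rewrite B0 mxE.
rewrite /B bmxE !enum_rankK_in // (_ : set0 = [set v] :\ v); last by rewrite setDv.
rewrite ee_rem ?set11 // => /eqP; by rewrite signr_eq0.
Qed.

Lemma nat_final f q d c A B Cqd Cnd : (0 < c)%N ->
  (f * c <= A * B)%N -> (Cnd * c = A * Cqd)%N -> (q * B = d * Cqd)%N ->
  (f * q <= d * Cnd)%N.
Proof.
move=> c0 h1 h2 h3; rewrite -(leq_pmul2r c0).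
apply: leq_trans (_ : A * B * q <= _)%N.
  by rewrite mulnAC leq_mul2r h1 orbT.
by rewrite -mulnA (mulnC B) h3 mulnCA -h2 mulnA.
Qed.

Unset Implicit Arguments.
Set Strict Implicit.

Theorem lemma4p7 (F : fieldType) (n d : nat) (Delta : {set {set 'I_n}}) :
  simplicial_complex Delta ->
  (1 <= d)%N ->
  (exists2 s, s \in Delta & #|s| = d) ->
  (forall s, s \in Delta -> #|s| <= d)%N ->
  ((fvec Delta d.-1)%:R <= (d%:R / (Qtop F Delta d)%:R) * ('C(n, d))%:R :> rat)%R.
Proof.
move=> hsc d1 [s0 s0D cs0] hdim.
have n1 : (0 < n)%N.
  by apply: leq_trans d1 _; rewrite -cs0 -[X in (_ <= X)%N](card_ord n) max_card.
have Qpos : (1 <= Qtop F Delta d)%N.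
  rewrite /Qtop.
  have o1 : (1 < n.+1)%N by [].
  apply: (@leq_bigmax_cond _ _ (fun q : 'I_n.+1 => nat_of_ord q) (Ordinal o1)) => /=.
  by apply/forallP => i; rewrite eq_sym; apply: Mshift_ne1.
have := @bigmax_att _ (fun q : 'I_n.+1 => (0 < q)%N && [forall i : 'I_(n - d), (q : nat) != Mshift F Delta i.+1]) (fun q => nat_of_ord q).
rewrite -/(Qtop F Delta d) => /(_ Qpos) [qq /andP[_ /forallP hqq] eQ].
set q := Qtop F Delta d in Qpos eQ *.
have qn : (q <= n)%N by rewrite eQ -ltnS ltn_ord.
set f := fvec Delta d.-1.
have fE : f = #|faces_of_size Delta d| by rewrite /f /fvec prednK.
have fC : (f <= 'C(n, d))%N.
  rewrite fE -[X in 'C(X, _)](card_ord n) -card_draws; apply: subset_leq_card.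
  by apply/subsetP => s; rewrite !inE => /andP[].
suff H : (f * q <= d * 'C(n, d))%N.
  rewrite mulrAC ler_pdivlMr ?ltr0n // -!natrM ler_nat; exact: H.
case: (leqP q d) => qd.
  by rewrite mulnC; apply: leq_mul.
have loc : forall W : {set 'I_n}, #|W| = q ->
    (#|facesW Delta W d| <= 'C(q.-1, d.-1))%N.
  move=> W cW.
  have nr : ~~ rhom_nonzero F Delta W (#|W|%:Z - (q - d)%:Z - 1)%R.
    apply/negP => hr.
    have jlt : ((q - d).-1 < n - d)%N by lia.
    have := hqq (Ordinal jlt); rewrite /= prednK ?subn_gt0 // -eQ => hne.
    have hM : (q <= Mshift F Delta (q - d))%N.
      rewrite -[X in (X <= _)%N]cW /Mshift; apply: (@leq_bigmax_cond _ (fun W : {set 'I_n} => rhom_nonzero F Delta W (#|W|%:Z - (q - d)%:Z - 1)%R) (fun W => #|W|) W hr).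
    have hM' : (q < Mshift F Delta (q - d))%N by rewrite ltn_neqAle hne hM.
    have := @bigmax_att _ (fun W : {set 'I_n} => rhom_nonzero F Delta W (#|W|%:Z - (q - d)%:Z - 1)%R) (fun W => #|W|).
    rewrite -/(Mshift F Delta (q - d)) => /(_ (leq_ltn_trans (leq0n _) hM')) [W' hr' eW'].
    rewrite eW' in hM'.
    move: hr'; rewrite /rhom_nonzero.
    have e : ((#|W'|%:Z - (q - d)%:Z - 1) + 1 = (#|W'| - (q - d))%N%:Z)%R by lia.
    rewrite e absz_nat /= [X in (_ < X)%N](@no_big_faces n Delta d W' (#|W'| - (q - d))) //; lia.
  move: nr; rewrite /rhom_nonzero.
  have e : ((#|W|%:Z - (q - d)%:Z - 1) + 1 = d%:Z)%R by rewrite cW; lia.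
  rewrite e absz_nat /= -leqNgt => h.
  apply: leq_trans h _.
  have r0 : \rank (bmx F Delta W d.+1) = 0%N.
    apply/eqP; rewrite -leqn0; apply: leq_trans (rank_leq_row _) _.
    by rewrite (@no_big_faces n Delta d W d.+1).
  rewrite r0 add0n -cW; apply: rank_ub => //; lia.
have cq : #|[set W : {set 'I_n} | #|W| == q]| = 'C(n, q).
  by rewrite card_draws card_ord.
have sumq (G : {set 'I_n} -> nat) :
    \sum_(W : {set 'I_n} | #|W| == q) G W = \sum_(W in [set W : {set 'I_n} | #|W| == q]) G W.
  by apply: eq_bigl => W; rewrite inE.
set S := faces_of_size Delta d.
have hS : forall s, s \in S -> #|s| = d by move=> s; rewrite inE => /andP[_ /eqP].
have e1 : \sum_(W : {set 'I_n} | #|W| == q) #|facesW Delta W d| = (#|S| * 'C(n - d, q - d))%N.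
  rewrite -(dcount hS (ltnW qd)); apply: eq_bigr => W _; apply: eq_card => s; rewrite !inE.
  by case: (s \in Delta); case: (s \subset W); case: (#|s| == d).
have h1 : (#|S| * 'C(n - d, q - d) <= 'C(n, q) * 'C(q.-1, d.-1))%N.
  rewrite -e1 -cq -sum_nat_const sumq; apply: leq_sum => W; rewrite inE => /eqP cW.
  exact: loc.
set S' := [set s : {set 'I_n} | #|s| == d].
have hS' : forall s, s \in S' -> #|s| = d by move=> s; rewrite inE => /eqP.
have e2 : ('C(n, d) * 'C(n - d, q - d) = 'C(n, q) * 'C(q, d))%N.
  rewrite -[X in 'C(X, d)](card_ord n) -card_draws -/S' -(dcount hS' (ltnW qd)).
  rewrite -cq -sum_nat_const sumq; apply: eq_bigr => W; rewrite inE => /eqP cW.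
  rewrite -cW -cards_draws; apply: eq_card => s; rewrite !inE andbC //.
have e3 : (q * 'C(q.-1, d.-1) = d * 'C(q, d))%N.
  by rewrite mul_bin_diag prednK.
rewrite fE; apply: (nat_final _ h1 e2 e3).
by rewrite bin_gt0; lia.
Qed.
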